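(* Let $n,m\ge2$ and $d\ge\max(n,m)-1$. Let $\mathcal U$ be a set of $n$ vectors forming an $(n-1)$-simplex ETF and $\mathcal V$ a set of $m$ vectors forming an $(m-1)$-simplex ETF, all on the unit sphere of $\mathbb R^d$. Let $\mathcal U\cup\mathcal V$ denote the collection of all $n+m$ vectors (concatenation, counted with multiplicity). Then $$\frac{1}{|\mathcal U\cup\mathcal V|\,(|\mathcal U\cup\mathcal V|-1)}\sum_{u\ne v\in\mathcal U\cup\mathcal V}u^\top v=-\frac{1}{n+m-1},$$ where the sum runs over ordered pairs of distinct members of the collection and $|\mathcal U\cup\mathcal V|=n+m$.
   Context: A set of $k$ vectors $W$ on the unit sphere of $\mathbb R^d$ is a $(k-1)$-simplex ETF if $\|w\|_2=1$ for all $w\in W$ and $w^\top w'=-\frac{1}{k-1}$ for all distinct $w,w'\in W$. *)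

(* Defs.v *)
From mathcomp Require Import all_boot all_order all_algebra.
Set Implicit Arguments. Unset Strict Implicit. Unset Printing Implicit Defensive.
Import Order.TTheory GRing.Theory Num.Theory.
Local Open Scope ring_scope.

Definition dotv (R : rcfType) (d : nat) (u v : 'rV[R]_d) : R := (u *m v^T) 0 0.

Definition norm2 (R : rcfType) (d : nat) (w : 'rV[R]_d) : R := Num.sqrt (dotv w w).

Definition simplex_ETF (R : rcfType) (d k : nat) (W : 'I_k -> 'rV[R]_d) : Prop :=
  (forall i, norm2 (W i) = 1) /\
  (forall i j, i != j -> dotv (W i) (W j) = - (k.-1%:R)^-1).

Definition concat_fam (R : rcfType) (d n m : nat)
  (U : 'I_n -> 'rV[R]_d) (V : 'I_m -> 'rV[R]_d) (k : 'I_(n + m)) : 'rV[R]_d :=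
  match split k with inl i => U i | inr j => V j end.

(* Main.v *)
Require Import Defs.
From mathcomp Require Import all_boot all_order all_algebra.
Import Order.TTheory GRing.Theory Num.Theory.
Local Open Scope ring_scope.

Lemma msq {R : rcfType} (x : R) : 0 <= x * x.
Proof. by rewrite -expr2 sqr_ge0. Qed.

Lemma dotvE (R : rcfType) d (u v : 'rV[R]_d) : dotv u v = \sum_j u 0 j * v 0 j.
Proof. by rewrite /dotv !mxE; apply: eq_bigr => j _; rewrite mxE. Qed.

Lemma dotv_suml (R : rcfType) d (I : finType) (P : pred I) (F : I -> 'rV[R]_d) w :
  dotv (\sum_(i | P i) F i) w = \sum_(i | P i) dotv (F i) w.
Proof.
rewrite dotvE; under eq_bigr do rewrite summxE mulr_suml.
by rewrite exchange_big; apply: eq_bigr => i _; rewrite dotvE.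
Qed.

Lemma dotv_sumr (R : rcfType) d (I : finType) (P : pred I) (F : I -> 'rV[R]_d) w :
  dotv w (\sum_(i | P i) F i) = \sum_(i | P i) dotv w (F i).
Proof.
rewrite dotvE; under eq_bigr do rewrite summxE mulr_sumr.
by rewrite exchange_big; apply: eq_bigr => i _; rewrite dotvE.
Qed.

Lemma dotv_ge0 {R : rcfType} {d} (w : 'rV[R]_d) : 0 <= dotv w w.
Proof. by rewrite dotvE; apply: sumr_ge0 => j _; exact: msq. Qed.

Lemma dotv_eq0 (R : rcfType) d (w : 'rV[R]_d) : dotv w w = 0 -> w = 0.
Proof.
rewrite dotvE => H; apply/matrixP => i j; rewrite (ord1 i) mxE.
have := @psumr_eq0P _ _ xpredT (fun j => w 0 j * w 0 j) (fun j _ => msq (w 0 j)) H j isT.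
by move/eqP; rewrite mulf_eq0 orbb => /eqP.
Qed.

Lemma ETF_self {R : rcfType} {d k} (W : 'I_k -> 'rV[R]_d) :
  simplex_ETF W -> forall i, dotv (W i) (W i) = 1.
Proof.
move=> [H1 _] i; have := H1 i; rewrite /norm2 => E.
by rewrite -(sqr_sqrtr (dotv_ge0 (W i))) E expr1n.
Qed.

Lemma ETF_sum0 {R : rcfType} {d k} {W : 'I_k -> 'rV[R]_d} :
  (2 <= k)%N -> simplex_ETF W -> \sum_i W i = 0.
Proof.
move=> Hk HW; apply: dotv_eq0.
rewrite dotv_suml big1 // => i _; rewrite dotv_sumr (bigD1 i) //= ETF_self //.
have -> : \sum_(j | j != i) dotv (W i) (W j) = \sum_(j | j != i) - (k.-1%:R)^-1.
  by apply: eq_bigr => j ji; rewrite HW.2 // eq_sym.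
rewrite sumr_const cardC1 card_ord mulNrn; set c := (k.-1)%:R; rewrite -mulr_natl -/c mulfV ?subrr // /c.
by rewrite pnatr_eq0 -lt0n; move: Hk; clear; case: k => [|[|k]].
Qed.

Theorem lemmaC14 (R : rcfType) (n m d : nat)
  (Hn : (2 <= n)%N) (Hm : (2 <= m)%N) (Hd : ((maxn n m).-1 <= d)%N)
  (U : 'I_n -> 'rV[R]_d) (V : 'I_m -> 'rV[R]_d)
  (HU : simplex_ETF U) (HV : simplex_ETF V) :
  ((n + m)%:R * ((n + m).-1)%:R)^-1 *
    (\sum_(k : 'I_(n + m)) \sum_(l : 'I_(n + m) | l != k)
        dotv (concat_fam U V k) (concat_fam U V l))
  = - (((n + m).-1)%:R)^-1.
Proof.
set F := concat_fam U V.
have FL i : F (lshift m i) = U i by rewrite /F /concat_fam (unsplitK (inl _ i)).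
have FR j : F (rshift n j) = V j by rewrite /F /concat_fam (unsplitK (inr _ j)).
have Fs : \sum_k F k = 0.
  rewrite big_split_ord /=.
  rewrite (eq_bigr _ (fun i _ => FL i)) (eq_bigr _ (fun i _ => FR i)).
  by rewrite (ETF_sum0 Hn HU) (ETF_sum0 Hm HV) addr0.
have Fself k : dotv (F k) (F k) = 1.
  rewrite /F /concat_fam; case: split => i; exact: ETF_self.
have -> : \sum_(k : 'I_(n + m)) \sum_(l : 'I_(n + m) | l != k) dotv (F k) (F l)
          = - (n + m)%:R.
  transitivity (\sum_(k : 'I_(n + m)) (dotv (F k) (\sum_l F l) - 1)).
    apply: eq_bigr => k _; rewrite [in RHS]dotv_sumr [in RHS](bigD1 k) //= Fself.
    by rewrite addrC addrK.
  rewrite big_split /= -dotv_suml Fs.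
  rewrite sumr_const card_ord /dotv mul0mx mxE add0r.
  by rewrite -mulNrn -mulr_natr mulN1r.
have H1 : (n + m)%:R != 0 :> R by rewrite pnatr_eq0 -lt0n addn_gt0 (leq_trans _ Hn).
have H2 : ((n + m).-1)%:R != 0 :> R.
  by rewrite pnatr_eq0 -lt0n; move: (leq_trans Hn (leq_addr m n)); case: (n + m)%N => [|[|k]].
by rewrite invfM mulrN mulrAC mulVf // mul1r.
Qed.
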